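(* Let $I,J\subseteq\mathbb{R}$ be non-degenerate, bounded, closed intervals. For every $n\in\omega$ let $x_n$ be points of the interior of $I$, pairwise distinct, and let $A_n\subseteq J$ be dense in $J$. Then there exists an increasing bijection $f\colon I\to J$ such that $f(x_n)\in A_n$ for all $n\in\omega$. *)

(* Defs.v *)
From Stdlib Require Import Reals.
Open Scope R_scope.

Definition Icc (a b : R) (x : R) : Prop := a <= x <= b.

Definition dense_in (A S : R -> Prop) : Prop :=
  forall y, S y -> forall eps, 0 < eps -> exists z, A z /\ Rabs (z - y) < eps.

Definition increasing_on (S : R -> Prop) (f : R -> R) : Prop :=
  forall x y, S x -> S y -> x < y -> f x < f y.

Definition bijection_on (S T : R -> Prop) (f : R -> R) : Prop :=
  (forall x, S x -> T (f x)) /\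
  (forall x y, S x -> S y -> f x = f y -> x = y) /\
  (forall y, T y -> exists x, S x /\ f x = y).

(* Main.v *)
Require Import Defs.
From Stdlib Require Import Reals Lra Lia Classical ClassicalEpsilon.
Open Scope R_scope.

Lemma abs_le_iff z e : Rabs z <= e <-> -e <= z <= e.
Proof. unfold Rabs; destruct (Rcase_abs z); split; intros; lra. Qed.
Lemma abs_lt_iff z e : Rabs z < e <-> -e < z < e.
Proof. unfold Rabs; destruct (Rcase_abs z); split; intros; lra. Qed.

Definition w (n : nat) : R := (/2)^n.
Lemma w_pos n : 0 < w n.
Proof. unfold w; apply pow_lt; lra. Qed.
Lemma w_S n : w (S n) = w n / 2.
Proof. unfold w; simpl; field. Qed.
Lemma w_small eps : 0 < eps -> exists n, w n < eps.
Proof.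
  intros He. destruct (pow_lt_1_zero (/2)) with (y := eps) as [N HN]; auto.
  { rewrite Rabs_right; lra. }
  exists N. specialize (HN N (le_n N)). unfold w.
  rewrite Rabs_right in HN; auto. left; apply pow_lt; lra.
Qed.

Lemma mono_le (F : R -> R) : (forall s t, s < t -> F s < F t) ->
  forall s t, s <= t -> F s <= F t.
Proof.
  intros H s t Hst. destruct (Rle_lt_or_eq_dec s t Hst) as [h|h].
  - left; auto.
  - subst; lra.
Qed.

Lemma fin_sep (p : nat -> R) k : (forall m, (m < k)%nat -> 0 < p m) ->
  exists r, 0 < r /\ forall m, (m < k)%nat -> r <= p m.
Proof.
  induction k as [|k IH]; intros H.
  - exists 1; split; [lra|]; intros; lia.
  - destruct IH as [r [Hr H']]. { intros; apply H; lia. }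
    exists (Rmin r (p k)); split. { apply Rmin_pos; auto. }
    intros m Hm. destruct (Nat.eq_dec m k) as [->|Hne].
    + apply Rmin_r.
    + eapply Rle_trans; [apply Rmin_l|]. apply H'; lia.
Qed.

Lemma mono_surj_cont (F : R -> R) : (forall s t, s < t -> F s < F t) ->
  (forall z, exists t, F t = z) ->
  forall t eps, 0 < eps -> exists del, 0 < del /\
    forall s, Rabs (s - t) < del -> Rabs (F s - F t) < eps.
Proof.
  intros Hinc Hsur t eps He.
  destruct (Hsur (F t - eps/2)) as [t1 H1].
  destruct (Hsur (F t + eps/2)) as [t2 H2].
  assert (t1 < t).
  { destruct (Rlt_or_le t1 t) as [h|h]; auto.
    pose proof (mono_le F Hinc _ _ h); lra. }
  assert (t < t2).
  { destruct (Rlt_or_le t t2) as [h|h]; auto.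
    pose proof (mono_le F Hinc _ _ h); lra. }
  exists (Rmin (t - t1) (t2 - t)); split.
  { apply Rmin_pos; lra. }
  intros s Hs. apply abs_lt_iff in Hs.
  pose proof (Rmin_l (t - t1) (t2 - t)). pose proof (Rmin_r (t - t1) (t2 - t)).
  assert (F t1 < F s) by (apply Hinc; lra).
  assert (F s < F t2) by (apply Hinc; lra).
  apply abs_lt_iff; lra.
Qed.

Definition Inv (a b c d : R) (F : R -> R) : Prop :=
  (forall s t, s < t -> F s < F t) /\ (forall z, exists t, F t = z) /\ F a = c /\ F b = d.

Definition Rel (x : nat -> R) (A : nat -> R -> Prop) (n : nat) (F F' : R -> R) : Prop :=
  (forall t, Rabs (F' t - F t) <= w n) /\
  (forall u, F (u - 2 * w n) <= F' u /\ F' u <= F (u + 2 * w n)) /\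
  (forall m, (m < n)%nat -> F' (x m) = F (x m)) /\
  A n (F' (x n)).

Lemma step a b c d (x : nat -> R) (A : nat -> R -> Prop) n F :
  a < b -> c < d -> (forall m, a < x m < b) ->
  (forall m, (m < n)%nat -> x m <> x n) ->
  dense_in (A n) (Icc c d) -> Inv a b c d F ->
  exists F', Inv a b c d F' /\ Rel x A n F F'.
Proof.
  intros Hab Hcd Hx Hdist Hdense [Hinc [Hsur [Ha Hb]]].
  pose proof (mono_le F Hinc) as Hmono.
  set (x0 := x n).
  destruct (fin_sep (fun m => Rabs (x m - x0)) n) as [r [Hr Hrm]].
  { intros m Hm. apply Rabs_pos_lt. intro h. apply (Hdist m Hm). unfold x0 in h; lra. }
  destruct (mono_surj_cont F Hinc Hsur x0 (w n / 2)) as [d1 [Hd1 Hc]].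
  { pose proof (w_pos n); lra. }
  pose proof (Hx n) as Hxn. fold x0 in Hxn.
  pose proof (w_pos n) as Hw.
  set (del := Rmin (Rmin (d1/2) (w n)) (Rmin (r/2) (Rmin ((x0-a)/2) ((b-x0)/2)))).
  assert (Hdel : 0 < del /\ del < d1 /\ del <= w n /\ del < r /\ a < x0 - del /\ x0 + del < b).
  { unfold del, Rmin; repeat destruct Rle_dec; lra. }
  destruct Hdel as [Hd0 [Hdd1 [Hdw [Hdr [Hda Hdb]]]]].
  set (L := F (x0 - del)). set (U := F (x0 + del)). set (Y0 := F x0).
  assert (HLY : L < Y0) by (apply Hinc; lra).
  assert (HYU : Y0 < U) by (apply Hinc; lra).
  assert (HUL : U - L < w n).
  { pose proof (Hc (x0 - del)) as h1. pose proof (Hc (x0 + del)) as h2.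
    fold L U Y0 in h1, h2.
    assert (Rabs (x0 - del - x0) < d1) by (apply abs_lt_iff; lra).
    assert (Rabs (x0 + del - x0) < d1) by (apply abs_lt_iff; lra). 
    specialize (h1 H); specialize (h2 H0).
    rewrite abs_lt_iff in h1, h2. lra. }
  assert (HY0 : Icc c d Y0).
  { split; [rewrite <- Ha | rewrite <- Hb]; left; apply Hinc; lra. }
  destruct (Hdense Y0 HY0 (Rmin (Y0 - L) (U - Y0))) as [y [HAy Hy]].
  { apply Rmin_pos; lra. }
  apply abs_lt_iff in Hy.
  pose proof (Rmin_l (Y0 - L) (U - Y0)). pose proof (Rmin_r (Y0 - L) (U - Y0)).
  assert (HLy : L < y) by lra. assert (HyU : y < U) by lra.
  set (b1 := (y - L) / del). set (b2 := (U - y) / del).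
  assert (Hb1 : 0 < b1) by (unfold b1; apply Rdiv_lt_0_compat; lra).
  assert (Hb2 : 0 < b2) by (unfold b2; apply Rdiv_lt_0_compat; lra).
  assert (Hb1d : b1 * del = y - L) by (unfold b1; field; lra).
  assert (Hb2d : b2 * del = U - y) by (unfold b2; field; lra).
  set (F' := fun t => if Rle_dec t (x0 - del) then F t else
                      if Rle_dec (x0 + del) t then F t else
                      if Rle_dec t x0 then L + b1 * (t - (x0 - del))
                      else y + b2 * (t - x0)).
  assert (P1 : forall t, t <= x0 - del -> F' t = F t).
  { intros t h; unfold F'; destruct (Rle_dec t (x0 - del)); [reflexivity| lra]. }
  assert (P2 : forall t, x0 + del <= t -> F' t = F t).
  { intros t h; unfold F'; destruct (Rle_dec t (x0 - del)); [reflexivity|].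
    destruct (Rle_dec (x0 + del) t); [reflexivity| lra]. }
  assert (P3 : forall t, x0 - del < t <= x0 -> F' t = L + b1 * (t - (x0 - del))).
  { intros t h; unfold F'; destruct (Rle_dec t (x0 - del)); [lra|].
    destruct (Rle_dec (x0 + del) t); [lra|]. destruct (Rle_dec t x0); [reflexivity|lra]. }
  assert (P4 : forall t, x0 < t < x0 + del -> F' t = y + b2 * (t - x0)).
  { intros t h; unfold F'; destruct (Rle_dec t (x0 - del)); [lra|].
    destruct (Rle_dec (x0 + del) t); [lra|]. destruct (Rle_dec t x0); [lra|reflexivity]. }
  assert (R1 : forall t, t <= x0 - del -> F' t <= L /\ F' t = F t).
  { intros t h; rewrite P1; auto. split; auto. apply Hmono; auto. }
  assert (R2 : forall t, x0 + del <= t -> U <= F' t /\ F' t = F t).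
  { intros t h; rewrite P2; auto. split; auto. apply Hmono; auto. }
  assert (R3 : forall t, x0 - del < t <= x0 -> L < F' t <= y).
  { intros t h; rewrite P3; auto.
    pose proof (Rmult_lt_0_compat b1 (t - (x0 - del)) Hb1 ltac:(lra)).
    pose proof (Rmult_le_compat_l b1 (t - (x0 - del)) del ltac:(lra) ltac:(lra)). lra. }
  assert (R4 : forall t, x0 < t < x0 + del -> y < F' t < U).
  { intros t h; rewrite P4; auto.
    pose proof (Rmult_lt_0_compat b2 (t - x0) Hb2 ltac:(lra)).
    pose proof (Rmult_lt_compat_l b2 (t - x0) del Hb2 ltac:(lra)). lra. }
  assert (Rmid : forall t, x0 - del < t < x0 + del -> L < F' t < U /\ L < F t < U).
  { intros t h. split.
    - destruct (Rle_dec t x0).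
      + pose proof (R3 t (conj (proj1 h) r0)); lra.
      + pose proof (R4 t (conj (Rnot_le_lt _ _ n0) (proj2 h))); lra.
    - split; apply Hinc; lra. }
  exists F'. split; [split; [|split; [|split]] | split; [|split; [|split]]].
  -
    intros s t Hst.
    destruct (Rle_dec s (x0 - del)) as [s1|s1].
    { destruct (Rle_dec t (x0 - del)) as [t1|t1].
      { rewrite (P1 s s1), (P1 t t1); auto. }
      destruct (Rle_dec (x0 + del) t) as [t2|t2].
      { destruct (R1 s s1); destruct (R2 t t2); lra. }
      pose proof (Rmid t ltac:(lra)); destruct (R1 s s1); lra. }
    destruct (Rle_dec (x0 + del) s) as [s2|s2].
    { rewrite (P2 s s2), (P2 t); auto; lra. }
    destruct (Rle_dec (x0 + del) t) as [t2|t2].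
    { pose proof (Rmid s ltac:(lra)). destruct (R2 t t2).
      destruct (Rle_dec s x0).
      + pose proof (R3 s ltac:(lra)); lra.
      + pose proof (R4 s ltac:(lra)); lra. }
    destruct (Rle_dec t x0) as [t3|t3].
    { rewrite (P3 s), (P3 t); try lra. nra. }
    destruct (Rle_dec s x0) as [s3|s3].
    { pose proof (R3 s ltac:(lra)); pose proof (R4 t ltac:(lra)); lra. }
    rewrite (P4 s), (P4 t); try lra. nra.
  -
    intros z.
    destruct (Rle_dec z L) as [z1|z1].
    { destruct (Hsur z) as [t Ht]. exists t.
      assert (t <= x0 - del).
      { destruct (Rle_dec t (x0 - del)); auto. exfalso.
        assert (L < F t) by (apply Hinc; lra). lra. }
      rewrite P1; auto. }
    destruct (Rle_dec U z) as [z2|z2].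
    { destruct (Hsur z) as [t Ht]. exists t.
      assert (x0 + del <= t).
      { destruct (Rle_dec (x0 + del) t); auto. exfalso.
        assert (F t < U) by (apply Hinc; lra). lra. }
      rewrite P2; auto. }
    destruct (Rle_dec z y) as [z3|z3].
    { set (q := (z - L) / b1).
      assert (Hq : b1 * q = z - L) by (unfold q; field; lra).
      assert (0 < q) by nra. assert (q <= del) by nra.
      exists (x0 - del + q). rewrite P3; [|lra].
      replace (x0 - del + q - (x0 - del)) with q by ring. lra. }
    { set (q := (z - y) / b2).
      assert (Hq : b2 * q = z - y) by (unfold q; field; lra).
      assert (0 < q) by nra. assert (q < del) by nra.
      exists (x0 + q). rewrite P4; [|lra].
      replace (x0 + q - x0) with q by ring. lra. }
  - rewrite P1; auto; lra.
  - rewrite P2; auto; lra.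
  -
    intros t. apply abs_le_iff.
    destruct (Rle_dec t (x0 - del)) as [t1|t1].
    { rewrite P1; auto. lra. }
    destruct (Rle_dec (x0 + del) t) as [t2|t2].
    { rewrite P2; auto. lra. }
    pose proof (Rmid t ltac:(lra)). lra.
  - intros u.
    destruct (Rle_dec u (x0 - del)) as [t1|t1].
    { rewrite P1; auto. split; apply Hmono; lra. }
    destruct (Rle_dec (x0 + del) u) as [t2|t2].
    { rewrite P2; auto. split; apply Hmono; lra. }
    pose proof (Rmid u ltac:(lra)).
    assert (F (u - 2 * w n) <= L) by (apply Hmono; lra).
    assert (U <= F (u + 2 * w n)) by (apply Hmono; lra).
    lra.
  - intros m Hm. pose proof (Hrm m Hm) as h.
    unfold Rabs in h; destruct (Rcase_abs (x m - x0)).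
    + apply P1; lra.
    + apply P2; lra.
  - fold x0. rewrite P3; [|lra]. replace (x0 - (x0 - del)) with del by ring.
    replace (L + b1 * del) with y by lra. exact HAy.
Qed.

Lemma lim_le U l N K : Un_cv U l -> (forall n, (N <= n)%nat -> U n <= K) -> l <= K.
Proof.
  intros Hc H. destruct (Rle_dec l K) as [h|h]; auto. exfalso.
  destruct (Hc (l - K)) as [N' HN]; [lra|].
  specialize (HN (max N N') ltac:(lia)). specialize (H (max N N') ltac:(lia)).
  unfold Rdist in HN. apply abs_lt_iff in HN. lra.
Qed.
Lemma lim_ge U l N K : Un_cv U l -> (forall n, (N <= n)%nat -> K <= U n) -> K <= l.
Proof.
  intros Hc H. destruct (Rle_dec K l) as [h|h]; auto. exfalso.
  destruct (Hc (K - l)) as [N' HN]; [lra|].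
  specialize (HN (max N N') ltac:(lia)). specialize (H (max N N') ltac:(lia)).
  unfold Rdist in HN. apply abs_lt_iff in HN. lra.
Qed.

Lemma limit_part a b c d (x : nat -> R) (A : nat -> R -> Prop) (Fs : nat -> R -> R) :
  a < b -> c < d ->
  (forall n, Inv a b c d (Fs n)) -> (forall n, Rel x A n (Fs n) (Fs (S n))) ->
  exists f : R -> R,
    increasing_on (Icc a b) f /\ bijection_on (Icc a b) (Icc c d) f /\
    (forall n, A n (f (x n))).
Proof.
  intros Hab Hcd HI HR.
  assert (Hinc : forall n s t, s < t -> Fs n s < Fs n t) by (intro n; apply (HI n)).
  assert (Hmono : forall n s t, s <= t -> Fs n s <= Fs n t)
    by (intro n; apply mono_le, Hinc).
  assert (Hcau : forall n j u, Fs n u - (2 * w n - 2 * w (n + j)%nat) <= Fs (n + j)%nat u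
                      <= Fs n u + (2 * w n - 2 * w (n + j)%nat)).
  { intros n j u. induction j as [|j IH].
    - rewrite Nat.add_0_r. lra.
    - rewrite Nat.add_succ_r. destruct (HR (n + j)%nat) as [h _].
      specialize (h u). apply abs_le_iff in h. rewrite w_S. lra. }
  assert (Hsh : forall n j u, Fs n (u - 4 * w n + 4 * w (n + j)%nat) <= Fs (n + j)%nat u
                      <= Fs n (u + 4 * w n - 4 * w (n + j)%nat)).
  { intros n j. induction j as [|j IH]; intros u.
    - rewrite Nat.add_0_r. replace (u - 4 * w n + 4 * w n) with u by ring.
      replace (u + 4 * w n - 4 * w n) with u by ring. lra.
    - rewrite Nat.add_succ_r. destruct (HR (n + j)%nat) as [_ [h _]].
      destruct (h u) as [h1 h2].
      destruct (IH (u - 2 * w (n + j)%nat)) as [i1 _].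
      destruct (IH (u + 2 * w (n + j)%nat)) as [_ i2].
      rewrite w_S.
      replace (u - 4 * w n + 4 * (w (n + j)%nat / 2)) with
        (u - 2 * w (n + j)%nat - 4 * w n + 4 * w (n + j)%nat) by field.
      replace (u + 4 * w n - 4 * (w (n + j)%nat / 2)) with
        (u + 2 * w (n + j)%nat + 4 * w n - 4 * w (n + j)%nat) by field.
      lra. }
  assert (Hprot : forall m j, Fs (S m + j)%nat (x m) = Fs (S m) (x m)).
  { intros m j. induction j as [|j IH].
    - rewrite Nat.add_0_r; reflexivity.
    - rewrite Nat.add_succ_r. destruct (HR (S m + j)%nat) as [_ [_ [h _]]].
      rewrite h by lia. exact IH. }
  assert (Hcc : forall u, Cauchy_crit (fun n => Fs n u)).
  { intros u eps He. destruct (w_small (eps / 4)) as [N HN]; [lra|].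
    exists N. intros n m Hn Hm. unfold Rdist.
    pose proof (Hcau N (n - N)%nat u) as h1. pose proof (Hcau N (m - N)%nat u) as h2.
    replace (N + (n - N))%nat with n in h1 by lia.
    replace (N + (m - N))%nat with m in h2 by lia.
    pose proof (w_pos n); pose proof (w_pos m).
    apply abs_lt_iff. lra. }
  assert (Hf : exists f : R -> R, forall u, Un_cv (fun n => Fs n u) (f u)).
  { exists (fun u => proj1_sig (R_complete _ (Hcc u))). intros u.
    exact (proj2_sig (R_complete _ (Hcc u))). }
  destruct Hf as [f Hf].
  assert (F1 : forall n u, Fs n u - 2 * w n <= f u <= Fs n u + 2 * w n).
  { intros n u. split.
    - apply (lim_ge _ _ n _ (Hf u)). intros m Hm.
      pose proof (Hcau n (m - n)%nat u) as h. replace (n + (m - n))%nat with m in h by lia.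
      pose proof (w_pos m); lra.
    - apply (lim_le _ _ n _ (Hf u)). intros m Hm.
      pose proof (Hcau n (m - n)%nat u) as h. replace (n + (m - n))%nat with m in h by lia.
      pose proof (w_pos m); lra. }
  assert (F2 : forall n u, Fs n (u - 4 * w n) <= f u <= Fs n (u + 4 * w n)).
  { intros n u. split.
    - apply (lim_ge _ _ n _ (Hf u)). intros m Hm.
      pose proof (Hsh n (m - n)%nat u) as h. replace (n + (m - n))%nat with m in h by lia.
      pose proof (w_pos m).
      eapply Rle_trans; [|apply h]. apply Hmono. lra.
    - apply (lim_le _ _ n _ (Hf u)). intros m Hm.
      pose proof (Hsh n (m - n)%nat u) as h. replace (n + (m - n))%nat with m in h by lia.
      pose proof (w_pos m).
      eapply Rle_trans; [apply h|]. apply Hmono. lra. }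
  assert (Fa : f a = c).
  { apply Rle_antisym.
    - apply (lim_le _ _ 0 _ (Hf a)). intros m _. destruct (HI m) as [_ [_ [h _]]]; lra.
    - apply (lim_ge _ _ 0 _ (Hf a)). intros m _. destruct (HI m) as [_ [_ [h _]]]; lra. }
  assert (Fb : f b = d).
  { apply Rle_antisym.
    - apply (lim_le _ _ 0 _ (Hf b)). intros m _. destruct (HI m) as [_ [_ [_ h]]]; lra.
    - apply (lim_ge _ _ 0 _ (Hf b)). intros m _. destruct (HI m) as [_ [_ [_ h]]]; lra. }
  assert (Fx : forall m, f (x m) = Fs (S m) (x m)).
  { intros m. apply Rle_antisym.
    - apply (lim_le _ _ (S m) _ (Hf (x m))). intros k Hk.
      rewrite <- (Hprot m (k - S m)%nat). replace (S m + (k - S m))%nat with k by lia. lra.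
    - apply (lim_ge _ _ (S m) _ (Hf (x m))). intros k Hk.
      rewrite <- (Hprot m (k - S m)%nat). replace (S m + (k - S m))%nat with k by lia. lra. }
  assert (Fstr : forall s t, s < t -> f s < f t).
  { intros s t Hst. destruct (w_small ((t - s) / 8)) as [n Hn]; [lra|].
    pose proof (w_pos n).
    destruct (F2 n s) as [_ h1]. destruct (F2 n t) as [h2 _].
    assert (Fs n (s + 4 * w n) < Fs n (t - 4 * w n)) by (apply Hinc; lra).
    lra. }
  assert (Fmono := mono_le f Fstr).
  assert (Fcont : continuity f).
  { intros t eps He. destruct (w_small (eps / 6)) as [n Hn]; [lra|].
    destruct (HI n) as [_ [Hsur _]].
    destruct (mono_surj_cont (Fs n) (Hinc n) Hsur t (eps / 3)) as [del [Hd Hc]]; [lra|].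
    exists del; split; [lra|]. intros s [_ Hs]. simpl in Hs |- *. unfold Rdist in Hs |- *.
    specialize (Hc s Hs). apply abs_lt_iff in Hc. apply abs_lt_iff.
    pose proof (F1 n s). pose proof (F1 n t). lra. }
  exists f. split; [|split; [split; [|split]|]].
  - intros s t _ _ h. apply Fstr, h.
  - intros t [h1 h2]. split.
    + rewrite <- Fa. apply Fmono; auto.
    + rewrite <- Fb. apply Fmono; auto.
  - intros s t _ _ h. destruct (Rtotal_order s t) as [h'|[h'|h']]; auto.
    + apply Fstr in h'; lra.
    + apply Fstr in h'; lra.
  - intros z [h1 h2].
    destruct (Rle_lt_or_eq_dec c z h1) as [z1|z1]; [|exists a; split; [split; lra| congruence]].
    destruct (Rle_lt_or_eq_dec z d h2) as [z2|z2]; [|exists b; split; [split; lra| congruence]].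
    destruct (IVT (f - fct_cte z)%F a b) as [t [Ht Hz]]; auto.
    + apply continuity_minus; auto. apply continuity_const. intros p q; reflexivity.
    + unfold minus_fct, fct_cte; lra.
    + unfold minus_fct, fct_cte; lra.
    + exists t; split; [exact Ht|]. unfold minus_fct, fct_cte in Hz; lra.
  - intros n. rewrite Fx. destruct (HR n) as [_ [_ [_ h]]]. exact h.
Qed.

Theorem lemma2p4 (a b c d : R) (x : nat -> R) (A : nat -> R -> Prop) :
  a < b -> c < d ->
  (forall n, a < x n < b) ->
  (forall n m, n <> m -> x n <> x m) ->
  (forall n y, A n y -> Icc c d y) ->
  (forall n, dense_in (A n) (Icc c d)) ->
  exists f : R -> R,
    increasing_on (Icc a b) f /\ bijection_on (Icc a b) (Icc c d) f /\
    (forall n, A n (f (x n))).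
Proof.
  intros Hab Hcd Hx Hdist _ Hdense.
  assert (Hstep : forall n F, exists F', Inv a b c d F -> Inv a b c d F' /\ Rel x A n F F').
  { intros n F. destruct (classic (Inv a b c d F)) as [h|h].
    - destruct (step a b c d x A n F Hab Hcd Hx) as [F' HF']; auto.
      + intros m Hm. apply Hdist. lia.
      + exists F'; auto.
    - exists F; intro; contradiction. }
  set (next := fun n F => proj1_sig (constructive_indefinite_description _ (Hstep n F))).
  assert (Hnext : forall n F, Inv a b c d F -> Inv a b c d (next n F) /\ Rel x A n F (next n F)).
  { intros n F. exact (proj2_sig (constructive_indefinite_description _ (Hstep n F))). }
  set (F0 := fun t => c + (d - c) / (b - a) * (t - a)).
  assert (HF0 : Inv a b c d F0).
  { unfold F0. split; [|split; [|split]].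
    - intros s t h. assert (0 < (d - c) / (b - a)) by (apply Rdiv_lt_0_compat; lra).
      pose proof (Rmult_lt_compat_l _ _ _ H h). lra.
    - intros z. exists (a + (z - c) * (b - a) / (d - c)). field; lra.
    - ring.
    - field; lra. }
  set (Fs := fun n => nat_rect (fun _ => R -> R) F0 (fun k G => next k G) n).
  assert (HI : forall n, Inv a b c d (Fs n)).
  { induction n as [|n IH]; [exact HF0|]. exact (proj1 (Hnext n (Fs n) IH)). }
  apply (limit_part a b c d x A Fs Hab Hcd HI).
  intros n. exact (proj2 (Hnext n (Fs n) (HI n))).
Qed.
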